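(* Let $\mathcal M$ be a companion-connected mixture of $L$ Markov chains on $n$ states, let $r=\sum_{\ell}|\mathcal C^\ell|$, let $R\in\mathbb R^{r\times r}$ be any invertible matrix, and for $k\in[n]$ put $R_{\mathrm{inv}(k)}=R^{-1}\Xi_k\in\mathbb R^{r\times L}$. Then for any states $i,j\in[n]$, the matrix $R_{\mathrm{inv}(j)}^\dagger R_{\mathrm{inv}(i)}\in\mathbb R^{L\times L}$ is the inverse of $R_{\mathrm{inv}(i)}^\dagger R_{\mathrm{inv}(j)}$ if and only if $\Xi_i=\Xi_j$ (i.e. $i$ and $j$ lie in the same connected component in every chain).
   Context: A mixture of $L$ Markov chains on $[n]$: row-stochastic $M^1,\dots,M^L\in\mathbb R^{n\times n}$ and starting vectors $s^\ell\in\mathbb R^n_{\ge0}$ with $\sum_{\ell,i}s^\ell_i=1$. For each $\ell$, $G^\ell$ is the undirected bipartite graph on $V^\pm=\{1^+,\dots,n^+,1^-,\dots,n^-\}$ with an edge $\{i^-,j^+\}$ whenever $M^\ell_{ij}>0$, and $\mathcal C^\ell$ is its set of connected components. The mixture is companion-connected if for each $j\in[n]$ there is $i\ne j$ such that for every $\ell$, $j^-$ and $i^-$ lie in the same component of $G^\ell$ as $j^+$ (so $j^+$ and $j^-$ are always in the same component; call it the component of chain $\ell$ containing $j$). Enumerate all components of all chains as $q=1,\dots,r$, $r=\sum_\ell|\mathcal C^\ell|$. For $j\in[n]$, $\Xi_j\in\{0,1\}^{r\times L}$ has $\Xi_j(q,\ell)=1$ iff the $q$-th component belongs to $\mathcal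 C^\ell$ and contains $j$, and $0$ otherwise. $A^\dagger$ denotes the Moore–Penrose pseudoinverse. *)

(* Defs.v *)
From HB Require Import structures.
From mathcomp Require Import all_boot all_order all_algebra.
From mathcomp Require Import reals.
From Stdlib Require Import ClassicalEpsilon.
Set Implicit Arguments. Unset Strict Implicit. Unset Printing Implicit Defensive.
Import Order.TTheory GRing.Theory Num.Theory.
Local Open Scope ring_scope.

Section Defs.
Variable R : realType.

(* The four Penrose conditions (real case: adjoint = transpose). *)
Definition penrose m n (A : 'M[R]_(m, n)) (B : 'M[R]_(n, m)) : Prop :=
  [/\ A *m B *m A = A, B *m A *m B = B,
      (A *m B)^T = A *m B & (B *m A)^T = B *m A].

(* Moore--Penrose pseudoinverse: the (unique, existing) matrix satisfying
   the Penrose conditions, picked by Hilbert's epsilon. *)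
Definition pinv m n (A : 'M[R]_(m, n)) : 'M[R]_(n, m) :=
  epsilon (inhabits 0) (fun B => penrose A B).

Definition row_stochastic n (P : 'M[R]_n) : Prop :=
  (forall i j, 0 <= P i j) /\ (forall i, \sum_j P i j = 1).

Definition is_mixture n L (M : 'I_L -> 'M[R]_n) (s : 'I_L -> 'rV[R]_n) : Prop :=
  (forall l, row_stochastic (M l)) /\
  (forall l i, 0 <= s l 0 i) /\
  \sum_l \sum_i s l 0 i = 1.

(* Vertices V^+- : inl j = j^+, inr i = i^-. *)
Definition vtx n := ('I_n + 'I_n)%type.

Definition Gedge n (P : 'M[R]_n) : rel (vtx n) :=
  fun x y => match x, y with
             | inr i, inl j => 0 < P i j
             | inl j, inr i => 0 < P i j
             | _, _ => false
             end.

Definition comps n (P : 'M[R]_n) : {set {set vtx n}} :=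
  [set [set y | connect (Gedge P) x y] | x : vtx n].

Definition all_comps n L (M : 'I_L -> 'M[R]_n) : {set 'I_L * {set vtx n}} :=
  [set p | p.2 \in comps (M p.1)].

Definition companion_connected n L (M : 'I_L -> 'M[R]_n) : Prop :=
  forall j : 'I_n, exists i : 'I_n, i != j /\
    forall l, connect (Gedge (M l)) (inl j) (inr j) /\
              connect (Gedge (M l)) (inl j) (inr i).

(* Xi_j for an enumeration e : 'I_r -> components: Xi_j(q,l) = 1 iff the
   q-th component belongs to chain l and contains j (i.e. j^+, equivalently
   j^- under companion-connectedness). *)
Definition Xi n L r (e : 'I_r -> 'I_L * {set vtx n}) (j : 'I_n) : 'M[R]_(r, L) :=
  \matrix_(q < r, l < L) (((e q).1 == l) && (inl j \in (e q).2))%:R.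

End Defs.

(* Main.v *)
Require Import Defs.
From HB Require Import structures.
From mathcomp Require Import all_boot all_order all_algebra.
From mathcomp Require Import reals.
From Stdlib Require Import ClassicalEpsilon.
Set Implicit Arguments. Unset Strict Implicit. Unset Printing Implicit Defensive.
Import Order.TTheory GRing.Theory Num.Theory.
Local Open Scope ring_scope.

Section LA.
Variable R : realType.

Lemma trmul0 m p (N : 'M[R]_(m, p)) : N^T *m N = 0 -> N = 0.
Proof.
move=> H; apply/matrixP => a b.
have := congr1 (fun X : 'M[R]_p => X b b) H.
rewrite !mxE => /psumr_eq0P Hs.
have := Hs (fun k _ => ltac:(rewrite mxE; apply: sqr_ge0)) a isT.
by rewrite !mxE => /eqP; rewrite mulf_eq0 orbb => /eqP ->.
Qed.

Lemma gram_unit m p (A : 'M[R]_(m, p)) (D : 'M[R]_(p, m)) :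
  D *m A = 1%:M -> A^T *m A \in unitmx.
Proof.
move=> DA; rewrite -row_free_unit; apply: inj_row_free => v Hv.
have HN : (A *m v^T)^T *m (A *m v^T) = 0.
  by rewrite trmx_mul trmxK mulmxA -(mulmxA v) Hv mul0mx.
have HN0 := trmul0 HN.
have : v^T = 0 by rewrite -(mul1mx v^T) -DA -mulmxA HN0 mulmx0.
by move=> /(congr1 trmx); rewrite trmxK trmx0.
Qed.

Lemma pinv_spec m p (A : 'M[R]_(m, p)) (D : 'M[R]_(p, m)) :
  D *m A = 1%:M -> penrose A (pinv A).
Proof.
move=> DA; apply: epsilon_spec.
have GU := gram_unit DA.
set G := A^T *m A in GU.
have BA : invmx G *m A^T *m A = 1%:M by rewrite -mulmxA mulVmx.
have GT : G^T = G by rewrite /G trmx_mul trmxK.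
exists (invmx G *m A^T); split.
- by rewrite -mulmxA BA mulmx1.
- by rewrite BA mul1mx.
- by rewrite trmx_mul trmx_mul trmxK trmx_inv GT mulmxA.
- by rewrite BA trmx1.
Qed.

Lemma pinv_left m p (A : 'M[R]_(m, p)) (D : 'M[R]_(p, m)) :
  D *m A = 1%:M -> pinv A *m A = 1%:M.
Proof.
move=> DA; have := pinv_spec DA; rewrite /penrose => -[H1 _ _ _].
have -> : pinv A *m A = D *m (A *m pinv A *m A) by rewrite !mulmxA DA mul1mx.
by rewrite H1.
Qed.

Lemma Gsym n (P : 'M[R]_n) : symmetric (Gedge P).
Proof. by move=> [a|a] [b|b]. Qed.

Lemma comp_shift n (P : 'M[R]_n) x z :
  z \in [set y | connect (Gedge P) x y] ->
  [set y | connect (Gedge P) x y] = [set y | connect (Gedge P) z y].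
Proof.
rewrite inE => xz; apply/setP => y; rewrite !inE.
apply/idP/idP => H.
  by rewrite (sym_connect_sym (@Gsym n P)) in xz; apply: connect_trans xz H.
exact: connect_trans xz H.
Qed.

Section Comb.
Variables (n L r : nat) (M : 'I_L -> 'M[R]_n) (e : 'I_r -> 'I_L * {set vtx n}).
Hypothesis einj : injective e.
Hypothesis ein : forall q, e q \in all_comps M.
Hypothesis esurj : forall p, p \in all_comps M -> exists q, e q = p.

Lemma comp_form q x : x \in (e q).2 ->
  (e q).2 = [set y | connect (Gedge (M (e q).1)) x y].
Proof.
have := ein q; rewrite inE => /imsetP [x0 _ ->] Hx.
exact: comp_shift.
Qed.

Lemma comp_uniq q q' x : (e q).1 = (e q').1 -> x \in (e q).2 -> x \in (e q').2 -> q = q'.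
Proof.
move=> E1 H H'; apply: einj.
have E2 : (e q).2 = (e q').2 by rewrite (comp_form H) (comp_form H') E1.
by case: (e q) E1 E2 => ? ?; case: (e q') => ? ? /= -> ->.
Qed.

Lemma comp_ex l x : exists q, (e q).1 = l /\ x \in (e q).2.
Proof.
have [|q Eq] := esurj (p := (l, [set y | connect (Gedge (M l)) x y])).
  by rewrite inE /=; apply/imsetP; exists x.
by exists q; rewrite Eq /= inE connect0.
Qed.

Lemma XiTXi k : (Xi R e k)^T *m Xi R e k = 1%:M.
Proof.
apply/matrixP => l m; rewrite !mxE.
have [q0 [E0 H0]] := comp_ex l (inl k).
rewrite (bigD1 q0) //= big1 ?addr0.
  by rewrite !mxE E0 H0 /= eqxx !andbT mul1r.
move=> q Hq; rewrite !mxE.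
case: eqP => [Eq|]; last by rewrite mul0r.
case Hk: (inl k \in (e q).2); last by rewrite mul0r.
by case/eqP: Hq; apply: (comp_uniq (x := inl k)) => //; rewrite Eq E0.
Qed.

Lemma Xi_fin i j (Y : 'M[R]_L) : Xi R e j = Xi R e i *m Y -> Xi R e i = Xi R e j.
Proof.
move=> E; apply/matrixP => q' l.
have [q [Eq Hj]] := comp_ex l (inl j).
have Hi : inl i \in (e q).2.
  have := congr1 (fun X : 'M[R]_(r, L) => X q l) E.
  rewrite !mxE Eq Hj eqxx /= => H1.
  have /existsP [m Hm] : [exists m, (((e q).1 == m) && (inl i \in (e q).2))%:R * Y m l != 0 :> R].
    apply: contraT; rewrite negb_exists => /forallP Hall.
    move: H1; rewrite big1; first by move/eqP; rewrite oner_eq0.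
    by move=> m _; apply/eqP; have := Hall m; rewrite mxE /= negbK.
  by move: Hm; case: ((e q).1 == m) => //=; case: (inl i \in _) => //; rewrite mul0r eqxx.
rewrite !mxE; case: eqP => //= El.
have Es : (e q').1 = (e q).1 by rewrite El Eq.
apply/congr1; apply/congr1; apply/idP/idP => H.
  by rewrite (comp_uniq Es H Hi).
by rewrite (comp_uniq Es H Hj).
Qed.
End Comb.
End LA.

Theorem lemma3 (R : realType) (n L r : nat)
  (M : 'I_L -> 'M[R]_n) (s : 'I_L -> 'rV[R]_n)
  (e : 'I_r -> 'I_L * {set vtx n}) (Rm : 'M[R]_r) :
  is_mixture M s ->
  companion_connected M ->
  (* e enumerates all components of all chains: q = 1..r *)
  injective e ->
  (forall q, e q \in all_comps M) ->
  (forall p, p \in all_comps M -> exists q, e q = p) ->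
  Rm \in unitmx ->
  forall i j : 'I_n,
    let Rinv k := invmx Rm *m Xi R e k in
    (pinv (Rinv j) *m Rinv i *m (pinv (Rinv i) *m Rinv j) = 1%:M /\
     pinv (Rinv i) *m Rinv j *m (pinv (Rinv j) *m Rinv i) = 1%:M)
    <-> Xi R e i = Xi R e j.
Proof.
move=> _ _ einj ein esurj RU i j Rinv.
have DA k : ((Xi R e k)^T *m Rm) *m Rinv k = 1%:M.
  by rewrite /Rinv mulmxA -(mulmxA _ Rm) mulmxV // mulmx1 (XiTXi einj ein esurj).
have BA k := pinv_left (DA k).
split; last first.
  move=> E; have EA : Rinv i = Rinv j by rewrite /Rinv E.
  by rewrite EA BA mul1mx.
case=> H1 _.
have := pinv_spec (DA i); rewrite /penrose => -[Pi1 Pi2 Pi3 Pi4].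
have := pinv_spec (DA j); rewrite /penrose => -[Pj1 Pj2 Pj3 Pj4].
have BAj := BA j.
move: H1 Pi1 Pi2 Pi3 Pi4 Pj1 Pj2 Pj3 Pj4 BAj.
set Ai := Rinv i; set Aj := Rinv j; set Bi := pinv Ai; set Bj := pinv Aj.
move=> H1 Pi1 Pi2 Pi3 Pi4 Pj1 Pj2 Pj3 Pj4 BAj.
have eAi : Rinv i = Ai by []. have eAj : Rinv j = Aj by [].
clearbody Bi Bj; clearbody Ai Aj.
set P := Ai *m Bi.
set Q := 1%:M - P.
have QT : Q^T = Q by rewrite /Q (raddfB (@trmx R r r)) /= trmx1 Pi3.
have PP : P *m P = P by rewrite /P mulmxA Pi1.
have QQ : Q *m Q = Q by rewrite /Q mulmxBl mul1mx mulmxBr mulmx1 PP subrr subr0.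
set N := Q *m Aj.
have NTN : N^T *m N = Aj^T *m Q *m Aj.
  by rewrite /N trmx_mul QT !mulmxA -(mulmxA _ Q Q) QQ.
have BjE : Bj = Bj *m Bj^T *m Aj^T.
  by rewrite -mulmxA -trmx_mul Pj3 mulmxA Pj2.
set C := Bj *m Bj^T.
have CG : C *m (Aj^T *m Aj) = 1%:M by rewrite mulmxA -BjE.
have [CU _] := mulmx1_unit CG.
have CN : C *m (N^T *m N) = 0.
  rewrite NTN !mulmxA -BjE /Q mulmxBr mulmx1 mulmxBl BAj /P.
  by rewrite !mulmxA -(mulmxA _ Bi) H1 subrr.
have N0 : N^T *m N = 0 by rewrite -(mul1mx (N^T *m N)) -(mulVmx CU) -mulmxA CN mulmx0.
have {N0}N0 := trmul0 N0.
have AjE : Aj = Ai *m (Bi *m Aj).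
  by apply/eqP; rewrite -subr_eq0 mulmxA -[X in X - _]mul1mx -mulmxBl; apply/eqP.
apply: (Xi_fin einj ein esurj (Y := Bi *m Aj)).
have XE k : Xi R e k = Rm *m Rinv k by rewrite /Rinv mulmxA mulmxV // mul1mx.
by rewrite !XE eAi eAj -mulmxA -AjE.
Qed.
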